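(* For $\varepsilon\in[0,1]$ and $\lambda\in\mathbb R$ consider on $\Omega=\mathbb S^1=\mathbb R/(2\pi\mathbb Z)$ with flow $\sigma(t,s)=s+t$ the family $$x'=\varepsilon x+\cos(s+t)-x|x|+\lambda,\qquad s\in\mathbb S^1,$$ with skewproduct flow $\tau^\lambda_\varepsilon$ and global attractor $\mathcal A^\lambda_\varepsilon=\bigcup_s\{s\}\times[\mathfrak l^\lambda_\varepsilon(s),\mathfrak u^\lambda_\varepsilon(s)]$. There exists $\varepsilon_0\in(0,1]$ such that for every $\varepsilon\in[0,\varepsilon_0)$: $\mathcal A^\lambda_\varepsilon$ is an attractive hyperbolic $\tau^\lambda_\varepsilon$-copy of the base for every $\lambda\in\mathbb R$, $\mathcal A^\lambda_\varepsilon=\{\mathfrak l^\lambda_\varepsilon\}$; the map $\mathbb R\to C(\mathbb S^1,\mathbb R)$, $\lambda\mapsto\mathfrak l^\lambda_\varepsilon$, is strictly increasing; and $\lim_{\lambda\to\pm\infty}\mathfrak l^\lambda_\varepsilon(s)=\pm\infty$ uniformly on $\mathbb S^1$.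
   Context: The global attractor of a skewproduct flow $\tau(t,s,x)=(s+t,v(t,s,x))$ on $\mathbb S^1\times\mathbb R$ is the compact invariant set attracting every bounded set forward in time (here it exists and is the union of bounded orbits). A $\tau$-copy of the base is the graph of a continuous $\mathfrak b:\mathbb S^1\to\mathbb R$ with $v(t,s,\mathfrak b(s))=\mathfrak b(s+t)$; it is attractive hyperbolic if there are $\rho>0,k\ge1,\gamma>0$ such that $|x-\mathfrak b(s)|<\rho$ implies $|v(t,s,x)-\mathfrak b(s+t)|\le ke^{-\gamma t}|x-\mathfrak b(s)|$ for all $t\ge0$. *)

(* Defs.v *)
From Stdlib Require Import Reals Lra.
From Coquelicot Require Import Coquelicot.
Open Scope R_scope.

(* The circle S^1 = R/(2 pi Z) is represented by R; functions on S^1 are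
   2*PI-periodic functions on R. The base flow is sigma(t,s) = s + t. *)

Definition rhs (eps lam : R) (s x : R) : R :=
  eps * x + cos s - x * Rabs x + lam.

Definition fwd_solution (eps lam s : R) (y : R -> R) : Prop :=
  forall t, 0 <= t -> is_derive y t (rhs eps lam (s + t) (y t)).

Definition entire_solution (eps lam s : R) (y : R -> R) : Prop :=
  forall t, is_derive y t (rhs eps lam (s + t) (y t)).

(* Global attractor: union of the bounded (entire) orbits.
   (s,x) is in A iff the orbit through (s,x) is defined and bounded on R. *)
Definition in_attractor (eps lam s x : R) : Prop :=
  exists y : R -> R, entire_solution eps lam s y /\ y 0 = x /\
    exists M, forall t, Rabs (y t) <= M.

Definition lowerb (eps lam : R) (s : R) : R :=
  real (Glb_Rbar (fun x => in_attractor eps lam s x)).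

(* b : S^1 -> R continuous, and its graph is tau-invariant: v(t,s,b s) = b(s+t). *)
Definition tau_copy (eps lam : R) (b : R -> R) : Prop :=
  (forall s, b (s + 2 * PI) = b s) /\
  (forall s, continuous b s) /\
  (forall s, entire_solution eps lam s (fun t => b (s + t))).

Definition attr_hyperbolic (eps lam : R) (b : R -> R) : Prop :=
  tau_copy eps lam b /\
  exists rho k gamma : R, 0 < rho /\ 1 <= k /\ 0 < gamma /\
    forall s (y : R -> R), fwd_solution eps lam s y ->
      Rabs (y 0 - b s) < rho ->
      forall t, 0 <= t ->
        Rabs (y t - b (s + t)) <= k * exp (- gamma * t) * Rabs (y 0 - b s).

(* Main.v *)
Require Import Defs.
From Stdlib Require Import Reals.
From Coquelicot Require Import Coquelicot.
From Stdlib Require Import Lra Psatz ZArith Lia Classical FunctionalExtensionality.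
Open Scope R_scope.

Lemma deriv_quad (f : R -> R) (x l C : R) :
  (forall h, Rabs (f (x + h) - f x - l * h) <= C * (h * h)) -> is_derive f x l.
Proof.
  intros H. apply is_derive_Reals. intros eps Heps.
  assert (HC : 0 <= C).
  { specialize (H 1). pose proof (Rabs_pos (f (x + 1) - f x - l * 1)). nra. }
  assert (Hd : 0 < eps / (C + 1)) by (apply Rdiv_lt_0_compat; lra).
  exists (mkposreal _ Hd). intros h Hh0 Hh. simpl in Hh.
  specialize (H h).
  replace ((f (x + h) - f x) / h - l) with ((f (x + h) - f x - l * h) / h)
    by (field; auto).
  rewrite Rabs_div by auto.
  apply Rlt_div_l. apply Rabs_pos_lt; auto.
  assert (Habs : 0 < Rabs h) by (apply Rabs_pos_lt; auto).
  assert (Hh2 : Rabs h * (C+1) < eps).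
  { apply (Rmult_lt_compat_r (C+1)) in Hh; [|lra].
    unfold Rdiv in Hh. rewrite Rmult_assoc, Rinv_l in Hh by lra. lra. }
  assert (h * h = Rabs h * Rabs h).
  { rewrite <- Rabs_mult. rewrite Rabs_right; [lra|]. apply Rle_ge, Rle_0_sqr. }
  nra.
Qed.

Lemma contpt_of_lip (f : R -> R) (x C : R) :
  (forall y, Rabs (f y - f x) <= C * Rabs (y - x)) -> continuity_pt f x.
Proof.
  intros H eps Heps.
  assert (HC : 0 <= C).
  { specialize (H (x+1)). replace (x + 1 - x) with 1 in H by ring.
    rewrite Rabs_R1 in H. pose proof (Rabs_pos (f (x + 1) - f x)). lra. }
  exists (eps / (C + 1)). split. apply Rdiv_lt_0_compat; lra.
  intros y [_ Hy]. unfold R_dist in *. simpl in *. unfold R_dist in *.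
  eapply Rle_lt_trans. apply H.
  assert (Rabs (y - x) * (C+1) < eps).
  { apply (Rmult_lt_compat_r (C+1)) in Hy; [|lra].
    unfold Rdiv in Hy. rewrite Rmult_assoc, Rinv_l in Hy by lra. lra. }
  pose proof (Rabs_pos (y - x)). nra.
Qed.

Lemma cont_of_lip (f : R -> R) (x C : R) :
  (forall y, Rabs (f y - f x) <= C * Rabs (y - x)) -> continuous f x.
Proof.
  intros H. apply continuity_pt_filterlim. eapply contpt_of_lip; eauto.
Qed.

Lemma contpt_of_deriv (f : R -> R) (x l : R) : is_derive f x l -> continuity_pt f x.
Proof.
  intros H. apply continuity_pt_filterlim.
  assert (Hc : continuous f x). { apply (ex_derive_continuous f x). exists l. exact H. }
  exact Hc.
Qed.

Lemma mono_deriv (h h' : R -> R) (a b : R) :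
  a <= b ->
  (forall t, a <= t <= b -> is_derive h t (h' t)) ->
  (forall t, a <= t <= b -> 0 <= h' t) -> h a <= h b.
Proof.
  intros Hab Hd Hp.
  destruct (MVT_gen h a b h') as [c [Hc Heq]].
  - intros x Hx. rewrite Rmin_left, Rmax_right in Hx by lra. apply Hd. lra.
  - intros x Hx. rewrite Rmin_left, Rmax_right in Hx by lra.
    eapply contpt_of_deriv. apply Hd. lra.
  - rewrite Rmin_left, Rmax_right in Hc by lra.
    assert (0 <= h' c) by (apply Hp; lra). nra.
Qed.

Lemma is_derive_lin (a t : R) : is_derive (fun t => a * t) t a.
Proof. auto_derive; auto; ring. Qed.

Lemma mvb (h h' : R -> R) (a b M : R) :
  a <= b ->
  (forall t, a <= t <= b -> is_derive h t (h' t)) ->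
  (forall t, a <= t <= b -> Rabs (h' t) <= M) -> Rabs (h b - h a) <= M * (b - a).
Proof.
  intros Hab Hd Hp.
  assert (H1 : (fun t => M * t - h t) a <= (fun t => M * t - h t) b).
  { apply (mono_deriv (fun t => M * t - h t) (fun t => M - h' t)); auto.
    - intros t Ht. apply (is_derive_minus (fun t => M * t) h t M (h' t)).
      2: apply Hd; auto.
      apply is_derive_lin.
    - intros t Ht. specialize (Hp t Ht). apply Rabs_le_between in Hp. lra. }
  assert (H2 : (fun t => M * t + h t) a <= (fun t => M * t + h t) b).
  { apply (mono_deriv (fun t => M * t + h t) (fun t => M + h' t)); auto.
    - intros t Ht. apply (is_derive_plus (fun t => M * t) h t M (h' t)).
      2: apply Hd; auto.
      apply is_derive_lin.
    - intros t Ht. specialize (Hp t Ht). apply Rabs_le_between in Hp. lra. }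
  simpl in *. apply Rabs_le_between. lra.
Qed.

Lemma deriv_pos_right (f : R -> R) x l : is_derive f x l -> 0 < l ->
  exists h, 0 < h /\ f x < f (x + h).
Proof.
  intros Hd Hl. apply is_derive_Reals in Hd.
  destruct (Hd (l / 2)) as [d Hdd]. lra.
  assert (Hpos := cond_pos d).
  exists (d / 2). split. lra.
  assert (Rabs ((f (x + d / 2) - f x) / (d / 2) - l) < l / 2).
  { apply Hdd. lra. rewrite Rabs_right; lra. }
  apply Rabs_lt_between in H.
  assert (0 < (f (x + d / 2) - f x) / (d / 2)) by lra.
  assert (0 < (f (x + d / 2) - f x)).
  { replace (f (x + d / 2) - f x) with (((f (x + d / 2) - f x) / (d / 2)) * (d/2)) by (field; lra).
    apply Rmult_lt_0_compat; lra. }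
  lra.
Qed.

Lemma deriv_max_zero (f : R -> R) x l : is_derive f x l -> (forall y, f y <= f x) -> l = 0.
Proof.
  intros Hd Hm.
  destruct (Rtotal_order l 0) as [Hl|[Hl|Hl]]; auto; exfalso.
  - assert (Hd' : is_derive (fun t => f (- t)) (- x) (- l)).
    { assert (H := is_derive_comp f (fun t => - t) (- x) l (-1)).
      rewrite Ropp_involutive in H. simpl in H.
      replace (- l) with (scal (-1) l). apply H. exact Hd.
      auto_derive; auto; ring.
      unfold scal; simpl; unfold mult; simpl. ring. }
    destruct (deriv_pos_right _ _ _ Hd') as [h [Hh Hlt]]. lra.
    specialize (Hm (- (- x + h))). rewrite Ropp_involutive in Hlt. lra.
  - destruct (deriv_pos_right _ _ _ Hd Hl) as [h [Hh Hlt]].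
    specialize (Hm (x + h)). lra.
Qed.

Lemma gq_bound x h : Rabs ((x + h) * Rabs (x + h) - x * Rabs x - 2 * Rabs x * h) <= h * h.
Proof.
  destruct (Rle_dec 0 x); destruct (Rle_dec 0 (x + h)).
  - rewrite (Rabs_right x), (Rabs_right (x+h)) by lra.
    replace ((x + h) * (x + h) - x * x - 2 * x * h) with (h*h) by ring.
    rewrite Rabs_right; nra.
  - rewrite (Rabs_right x), (Rabs_left (x+h)) by lra.
    apply Rabs_le_between. split; nra.
  - rewrite (Rabs_left x), (Rabs_right (x+h)) by lra.
    apply Rabs_le_between. split; nra.
  - rewrite (Rabs_left x), (Rabs_left (x+h)) by lra.
    apply Rabs_le_between. split; nra.
Qed.

Lemma is_derive_gq x : is_derive (fun x => x * Rabs x) x (2 * Rabs x).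
Proof.
  apply (deriv_quad _ _ _ 1). intros h. rewrite Rmult_1_l.
  replace (2 * Rabs x * h) with (2 * Rabs x * h) by ring. apply gq_bound.
Qed.

Definition pp (x : R) := (x * x + x * Rabs x) / 2.

Lemma is_derive_pp x : is_derive pp x (x + Rabs x).
Proof.
  unfold pp.
  apply (deriv_quad _ _ _ 1). intros h.
  pose proof (gq_bound x h).
  replace ((x + h) * (x + h) + (x + h) * Rabs (x + h)) with
    ((x*x + 2*x*h + h*h) + (x + h) * Rabs (x + h)) by ring.
  apply Rabs_le_between in H. apply Rabs_le_between. split; lra.
Qed.

Lemma pp_nonneg x : 0 <= pp x.
Proof. unfold pp. destruct (Rle_dec 0 x). rewrite Rabs_right; nra. rewrite Rabs_left; nra. Qed.

Lemma pp_neg x : x <= 0 -> pp x = 0.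
Proof. intros. unfold pp. destruct (Req_dec x 0). subst. rewrite Rabs_R0. lra.
  rewrite Rabs_left by lra. lra. Qed.

Lemma pp_pos x : 0 <= x -> pp x = x * x.
Proof. intros. unfold pp. rewrite Rabs_right by lra. lra. Qed.

Lemma lim_exp0 (a C g : R) : 0 < g -> (forall t, t <= 0 -> a <= C * exp (g * t)) -> a <= 0.
Proof.
  intros Hg H. destruct (Rle_dec a 0) as [|Ha]; auto. exfalso.
  assert (Ha' : 0 < a) by lra.
  assert (HC : 0 < C).
  { specialize (H 0 (Rle_refl 0)). rewrite Rmult_0_r, exp_0 in H. lra. }
  specialize (H (- (C / a) / g)).
  assert (Hx : 0 < C / a) by (apply Rdiv_lt_0_compat; lra).
  replace (g * (- (C / a) / g)) with (- (C / a)) in H by (field; lra).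
  assert (He : 1 + C / a <= exp (C / a)) by (apply exp_ineq1_le).
  rewrite exp_Ropp in H.
  assert (Hpos : 0 < exp (C / a)) by apply exp_pos.
  assert (C * / exp (C / a) * exp (C/a) = C) by (field; lra).
  assert (Hle : a <= C * / exp (C / a)).
  { apply H. assert (0 < (C / a) / g) by (apply Rdiv_lt_0_compat; lra). lra. }
  assert (a * exp (C/a) <= C).
  { apply (Rmult_le_compat_r (exp (C/a))) in Hle; lra. }
  assert (a * (1 + C / a) = a + C) by (field; lra).
  nra.
Qed.

Lemma lim_half (a b Q : R) : (forall n, a <= b + Q * (/2) ^ n) -> a <= b.
Proof.
  intros H. destruct (Rle_dec a b) as [|Hab]; auto. exfalso.
  destruct (Rle_dec Q 0).
  - specialize (H 0%nat). simpl in H. lra.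
  - assert (HQ : 0 < Q) by lra.
    destruct (pow_lt_1_zero (/2)) with (y := (a - b) / Q) as [N HN].
    rewrite Rabs_right; lra. apply Rdiv_lt_0_compat; lra.
    specialize (HN N (Nat.le_refl N)). specialize (H N).
    assert (0 < (/2)^N) by (apply pow_lt; lra).
    rewrite Rabs_right in HN by lra.
    assert (Q * (/2)^N < Q * ((a - b)/Q)) by (apply Rmult_lt_compat_l; lra).
    replace (Q * ((a - b)/Q)) with (a - b) in H1 by (field; lra). lra.
Qed.

Lemma per_nat (f : R -> R) T : (forall u, f (u + T) = f u) ->
  forall n u, f (u + INR n * T) = f u /\ f (u - INR n * T) = f u.
Proof.
  intros Hp n. induction n as [|n IH]; intros u.
  - simpl. rewrite Rmult_0_l, Rplus_0_r, Rminus_0_r. auto.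
  - rewrite S_INR. split.
    + replace (u + (INR n + 1) * T) with ((u + INR n * T) + T) by ring.
      rewrite Hp. apply IH.
    + destruct (IH (u - (INR n + 1) * T)) as [H1 _].
      replace (u - (INR n + 1) * T + INR n * T) with (u - T) in H1 by ring.
      rewrite <- H1. replace u with ((u - T) + T) at 2 by ring. rewrite Hp. auto.
Qed.

Lemma per_red (f : R -> R) T : 0 < T -> (forall u, f (u + T) = f u) ->
  forall u, exists r, 0 <= r <= T /\ f u = f r.
Proof.
  intros HT Hp u.
  destruct (archimed (u / T)) as [H1 H2].
  set (z := (up (u / T) - 1)%Z).
  assert (Hz : IZR z = IZR (up (u / T)) - 1) by (unfold z; rewrite minus_IZR; auto).
  exists (u - IZR z * T). split.
  - assert (u / T * T = u) by (field; lra).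
    split; [|]; nra.
  - destruct (Z_le_gt_dec 0 z) as [Hz0|Hz0].
    + rewrite <- (Z2Nat.id z Hz0), <- INR_IZR_INZ.
      destruct (per_nat f T Hp (Z.to_nat z) u). auto.
    + assert (Hz1 : (0 <= - z)%Z) by lia.
      replace (IZR z) with (- IZR (- z)) by (rewrite opp_IZR; ring).
      rewrite <- (Z2Nat.id (- z) Hz1), <- INR_IZR_INZ.
      destruct (per_nat f T Hp (Z.to_nat (- z)) u).
      replace (u - - INR (Z.to_nat (- z)) * T) with (u + INR (Z.to_nat (- z)) * T) by ring.
      auto.
Qed.

Lemma is_derive_cR (c t : R) : is_derive (fun _ => c) t 0.
Proof. auto_derive; auto. Qed.

Lemma deriv_prim (f : R -> R) (x0 C : R) (t : R) :
  (forall u v, Rabs (f v - f u) <= C * Rabs (v - u)) ->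
  is_derive (fun t => x0 + RInt f 0 t) t (f t).
Proof.
  intros Hl.
  assert (Hc : forall z, continuous f z) by (intros z; apply (cont_of_lip f z C); auto).
  replace (f t) with (0 + f t) by ring.
  apply (is_derive_plus (fun _ => x0) (fun t => RInt f 0 t)).
  apply is_derive_cR.
  apply (is_derive_RInt f (fun t => RInt f 0 t) 0 t). 2: apply Hc.
  apply filter_forall. intros b. apply (RInt_correct f 0 b).
  apply ex_RInt_continuous. intros; apply Hc.
Qed.

Fixpoint pic (F : R -> R -> R) (x0 : R) (n : nat) : R -> R :=
  match n with
  | O => fun _ => x0
  | S m => fun t => x0 + RInt (fun v => F v (pic F x0 m v)) 0 t
  end.

Definition Fhyp (F : R -> R -> R) (B L Lu : R) :=
  0 < L /\ 0 <= B /\ 0 <= Lu /\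
  (forall u x, Rabs (F u x) <= B) /\
  (forall u x y, Rabs (F u x - F u y) <= L * Rabs (x - y)) /\
  (forall u v x, Rabs (F u x - F v x) <= Lu * Rabs (u - v)).

Lemma comp_lip F B L Lu (p : R -> R) : Fhyp F B L Lu ->
  (forall t s, Rabs (p t - p s) <= B * Rabs (t - s)) ->
  forall u v, Rabs (F v (p v) - F u (p u)) <= (Lu + L * B) * Rabs (v - u).
Proof.
  intros (HL0 & HB0 & HLu0 & HB & HL & HU) Hp u v.
  replace (F v (p v) - F u (p u)) with ((F v (p v) - F u (p v)) + (F u (p v) - F u (p u))) by ring.
  eapply Rle_trans. apply Rabs_triang.
  specialize (HU v u (p v)). specialize (HL u (p v) (p u)). specialize (Hp v u).
  nra.
Qed.

Lemma pic_lip F B L Lu x0 : Fhyp F B L Lu ->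
  forall n t s, Rabs (pic F x0 n t - pic F x0 n s) <= B * Rabs (t - s).
Proof.
  intros HF n. destruct HF as (HL0 & HB0 & HLu0 & HB & HL & HU) eqn:E.
  induction n as [|n IH]; intros t s.
  - simpl. rewrite Rminus_eq_0, Rabs_R0. apply Rmult_le_pos; auto. apply Rabs_pos.
  - assert (Hd : forall t, is_derive (pic F x0 (S n)) t (F t (pic F x0 n t))).
    { intros t'. apply (deriv_prim (fun v => F v (pic F x0 n v)) x0 (Lu + L * B) t'). apply (comp_lip F B L Lu); auto. }
    destruct (Rle_dec s t).
    + rewrite Rabs_right with (r := t - s) by lra.
      apply (mvb _ (fun t => F t (pic F x0 n t))); auto.
    + rewrite Rabs_left with (r := t - s) by lra. rewrite Rabs_minus_sym.
      replace (- (t - s)) with (s - t) by ring.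
      apply (mvb _ (fun t => F t (pic F x0 n t))); auto. lra.
Qed.

Lemma pic_deriv F B L Lu x0 : Fhyp F B L Lu ->
  forall n t, is_derive (pic F x0 (S n)) t (F t (pic F x0 n t)).
Proof.
  intros HF n t. apply (deriv_prim (fun v => F v (pic F x0 n v)) x0 (Lu + L * B) t). apply (comp_lip F B L Lu); auto.
  intros t0 s0. apply (pic_lip F B L Lu); auto.
Qed.

Lemma pic_0 F x0 n : pic F x0 n 0 = x0.
Proof. destruct n; simpl; auto. rewrite RInt_point. unfold zero; simpl. ring. Qed.

Lemma gr_fwd (h h' : R -> R) (L D T : R) : 0 < L -> 0 <= T -> h 0 = 0 ->
  (forall t, 0 <= t <= T -> is_derive h t (h' t)) ->
  (forall t, 0 <= t <= T -> Rabs (h' t) <= L * D * exp (2 * L * t)) ->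
  Rabs (h T) <= D / 2 * exp (2 * L * T).
Proof.
  intros HL HT H0 Hd Hb.
  assert (HD : 0 <= D).
  { specialize (Hb 0). rewrite Rmult_0_r, exp_0 in Hb.
    assert (0 <= L * D). { pose proof (Rabs_pos (h' 0)). assert (Rabs (h' 0) <= L * D * 1) by (apply Hb; lra). lra. }
    nra. }
  set (psi := fun t => D / 2 * (exp (2 * L * t) - 1)).
  assert (Hpsi : forall t, is_derive psi t (L * D * exp (2 * L * t))).
  { intros t. unfold psi. auto_derive; auto. field. }
  assert (H1 : psi 0 - h 0 <= psi T - h T).
  { apply (mono_deriv (fun t => psi t - h t) (fun t => L * D * exp (2 * L * t) - h' t)); auto.
    intros t Ht. apply (is_derive_minus psi h). apply Hpsi. apply Hd; auto.
    intros t Ht. specialize (Hb t Ht). apply Rabs_le_between in Hb. lra. }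
  assert (H2 : psi 0 + h 0 <= psi T + h T).
  { apply (mono_deriv (fun t => psi t + h t) (fun t => L * D * exp (2 * L * t) + h' t)); auto.
    intros t Ht. apply (is_derive_plus psi h). apply Hpsi. apply Hd; auto.
    intros t Ht. specialize (Hb t Ht). apply Rabs_le_between in Hb. lra. }
  unfold psi in *. rewrite Rmult_0_r, exp_0 in H1, H2. rewrite H0 in H1, H2.
  apply Rabs_le_between. split; nra.
Qed.

Lemma gr_all (h h' : R -> R) (L D : R) : 0 < L -> h 0 = 0 ->
  (forall t, is_derive h t (h' t)) ->
  (forall t, Rabs (h' t) <= L * D * exp (2 * L * Rabs t)) ->
  forall t, Rabs (h t) <= D / 2 * exp (2 * L * Rabs t).
Proof.
  intros HL H0 Hd Hb t. destruct (Rle_dec 0 t).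
  - rewrite (Rabs_right t) by lra. apply (gr_fwd h h'); auto.
    intros s Hs. specialize (Hb s). rewrite (Rabs_right s) in Hb by lra. auto.
  - rewrite (Rabs_left t) by lra.
    assert (Hk := gr_fwd (fun s => h (- s)) (fun s => - h' (- s)) L D (- t) HL).
    simpl in Hk. rewrite Ropp_involutive in Hk. apply Hk.
    + lra.
    + rewrite Ropp_0. auto.
    + intros s Hs.
      assert (Hc := is_derive_comp h (fun s => - s) s (h' (- s)) (-1) (Hd (- s))).
      replace (- h' (- s)) with (scal (-1) (h' (- s))). apply Hc.
      auto_derive; auto; ring.
      unfold scal; simpl; unfold mult; simpl; ring.
    + intros s Hs. rewrite Rabs_Ropp. specialize (Hb (- s)).
      rewrite (Rabs_Ropp s), (Rabs_right s) in Hb by lra. auto.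
Qed.

Lemma pic_delta F B L Lu x0 : Fhyp F B L Lu ->
  forall n t, Rabs (pic F x0 (S n) t - pic F x0 n t) <=
    B / (2 * L) * (/2) ^ n * exp (2 * L * Rabs t).
Proof.
  intros HF. pose proof HF as (HL0 & HB0 & HLu0 & HB & HL & HU).
  induction n as [|n IH]; intros t.
  - simpl pow. rewrite Rmult_1_r.
    assert (H1 := pic_lip F B L Lu x0 HF 1 t 0).
    rewrite pic_0 in H1. replace (pic F x0 0 t) with x0 by auto.
    rewrite Rminus_0_r in H1. eapply Rle_trans. apply H1.
    assert (Hx := exp_ineq1_le (2 * L * Rabs t)).
    assert (0 <= B / (2 * L)) by (apply Rdiv_le_0_compat; lra).
    replace (B * Rabs t) with (B / (2 * L) * (2 * L * Rabs t)) by (field; lra).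
    apply Rmult_le_compat_l; auto. pose proof (Rabs_pos t). lra.
  - assert (Hg := gr_all (fun t => pic F x0 (S (S n)) t - pic F x0 (S n) t)
       (fun t => F t (pic F x0 (S n) t) - F t (pic F x0 n t)) L (B / (2 * L) * (/ 2) ^ n) HL0).
    cbv beta in Hg. replace (B / (2 * L) * (/ 2) ^ S n) with (B / (2 * L) * (/ 2) ^ n / 2) by (simpl; field; lra).
    apply Hg. rewrite !pic_0. ring.
    + intros s. apply (is_derive_minus (pic F x0 (S (S n))) (pic F x0 (S n))).
      apply (pic_deriv F B L Lu); auto. apply (pic_deriv F B L Lu); auto.
    + intros s. eapply Rle_trans. apply HL. specialize (IH s).
      replace (L * (B / (2 * L) * (/ 2) ^ n) * exp (2 * L * Rabs s)) with
        (L * (B / (2 * L) * (/ 2) ^ n * exp (2 * L * Rabs s))) by ring.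
      apply Rmult_le_compat_l; lra.
Qed.

Lemma pic_cauchy F B L Lu x0 : Fhyp F B L Lu ->
  forall n j t, Rabs (pic F x0 (n + j) t - pic F x0 n t) <=
    2 * (B / (2 * L)) * (/2) ^ n * (1 - (/2) ^ j) * exp (2 * L * Rabs t).
Proof.
  intros HF n j t. pose proof HF as (HL0 & _). induction j as [|j IH].
  - rewrite Nat.add_0_r, Rminus_eq_0, Rabs_R0. simpl. lra.
  - replace (n + S j)%nat with (S (n + j)) by lia.
    assert (H1 := pic_delta F B L Lu x0 HF (n + j) t).
    replace (pic F x0 (S (n + j)) t - pic F x0 n t) with
      ((pic F x0 (S (n + j)) t - pic F x0 (n + j) t) + (pic F x0 (n + j) t - pic F x0 n t)) by ring.
    eapply Rle_trans. apply Rabs_triang.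
    rewrite pow_add in H1. simpl pow.
    replace (2 * (B / (2 * L)) * (/ 2) ^ n * (1 - / 2 * (/ 2) ^ j) * exp (2 * L * Rabs t))
      with (B / (2 * L) * ((/ 2) ^ n * (/ 2) ^ j) * exp (2 * L * Rabs t) +
            2 * (B / (2 * L)) * (/ 2) ^ n * (1 - (/ 2) ^ j) * exp (2 * L * Rabs t)) by (field; lra).
    lra.
Qed.

Definition sol F x0 t := real (Lim_seq (fun n => pic F x0 n t)).

Lemma sol_lim F B L Lu x0 : Fhyp F B L Lu ->
  forall t, is_lim_seq (fun n => pic F x0 n t) (sol F x0 t).
Proof.
  intros HF t. pose proof HF as (HL0 & HB0 & _).
  assert (Hex : ex_finite_lim_seq (fun n => pic F x0 n t)).
  { apply ex_lim_seq_cauchy_corr. intros eps.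
    set (K := 2 * (B / (2 * L)) * exp (2 * L * Rabs t)).
    assert (HK : 0 <= K).
    { unfold K. apply Rmult_le_pos. apply Rmult_le_pos. lra. apply Rdiv_le_0_compat; lra.
      apply Rlt_le, exp_pos. }
    destruct (pow_lt_1_zero (/2)) with (y := eps / (2 * (K + 1))) as [N HN].
    rewrite Rabs_right; lra. apply Rdiv_lt_0_compat. apply cond_pos. lra.
    exists N. intros n m Hn Hm.
    assert (Hb : forall k, (N <= k)%nat -> Rabs (pic F x0 k t - pic F x0 N t) <= K * (/2)^N).
    { intros k Hk. replace k with (N + (k - N))%nat by lia.
      eapply Rle_trans. apply (pic_cauchy F B L Lu x0 HF).
      assert (0 < (/2) ^ (k - N)) by (apply pow_lt; lra).
      assert (0 < (/2) ^ N) by (apply pow_lt; lra).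
      unfold K. 
      assert (0 <= 2 * (B / (2 * L)) * (/ 2) ^ N * exp (2 * L * Rabs t)).
      { apply Rmult_le_pos. apply Rmult_le_pos. apply Rmult_le_pos. lra. apply Rdiv_le_0_compat; lra. lra. apply Rlt_le, exp_pos. }
      nra. }
    specialize (HN N (Nat.le_refl N)). rewrite Rabs_right in HN by (apply Rle_ge, pow_le; lra).
    replace (pic F x0 n t - pic F x0 m t) with
      ((pic F x0 n t - pic F x0 N t) - (pic F x0 m t - pic F x0 N t)) by ring.
    eapply Rle_lt_trans. apply Rabs_triang. rewrite Rabs_Ropp.
    assert (H1 := Hb n Hn). assert (H2 := Hb m Hm).
    assert (K * (/ 2) ^ N <= K * (eps / (2 * (K + 1)))) by (apply Rmult_le_compat_l; lra).
    assert (K * (eps / (2 * (K + 1))) < eps / 2).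
    { assert (Hp := cond_pos eps). apply Rmult_lt_reg_r with (2 * (K+1)). lra.
      field_simplify; try lra. }
    lra. }
  unfold sol. destruct Hex as [l Hl]. rewrite (is_lim_seq_unique _ _ Hl). simpl. auto.
Qed.

Lemma sol_bound F B L Lu x0 : Fhyp F B L Lu ->
  forall n t, Rabs (sol F x0 t - pic F x0 n t) <=
    2 * (B / (2 * L)) * (/2) ^ n * exp (2 * L * Rabs t).
Proof.
  intros HF n t. pose proof HF as (HL0 & HB0 & _).
  assert (Hl := sol_lim F B L Lu x0 HF t). apply is_lim_seq_Reals in Hl.
  apply Rle_plus_epsilon. intros e He.
  destruct (Hl e He) as [N HN].
  specialize (HN (N + n)%nat ltac:(lia)). unfold R_dist in HN.
  assert (Hc := pic_cauchy F B L Lu x0 HF n N t).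
  rewrite Nat.add_comm in HN.
  replace (sol F x0 t - pic F x0 n t) with
    ((pic F x0 (n + N) t - pic F x0 n t) - (pic F x0 (n + N) t - sol F x0 t)) by ring.
  eapply Rle_trans. apply Rabs_triang. rewrite Rabs_Ropp.
  assert (0 < (/2) ^ N) by (apply pow_lt; lra).
  assert (0 <= 2 * (B / (2 * L)) * (/ 2) ^ n * exp (2 * L * Rabs t)).
  { apply Rmult_le_pos. apply Rmult_le_pos. apply Rmult_le_pos. lra. apply Rdiv_le_0_compat; lra.
    apply pow_le; lra. apply Rlt_le, exp_pos. }
  nra.
Qed.

Lemma sol_0 F B L Lu x0 : Fhyp F B L Lu -> sol F x0 0 = x0.
Proof.
  intros HF. assert (Hl := sol_lim F B L Lu x0 HF 0).
  assert (Hc : is_lim_seq (fun n => pic F x0 n 0) x0).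
  { apply is_lim_seq_ext with (fun _ => x0). intros n. rewrite pic_0. auto.
    apply is_lim_seq_const. }
  assert (H := is_lim_seq_unique _ _ Hl). rewrite (is_lim_seq_unique _ _ Hc) in H.
  injection H. auto.
Qed.

Lemma pic_step F B L Lu x0 : Fhyp F B L Lu ->
  forall n t h, Rabs (pic F x0 (S n) (t + h) - pic F x0 (S n) t - F t (pic F x0 n t) * h)
     <= (Lu + L * B) * (h * h).
Proof.
  intros HF n t h. pose proof HF as (HL0 & HB0 & HLu0 & _).
  set (c := F t (pic F x0 n t)).
  set (q := fun w => pic F x0 (S n) w - c * w).
  assert (Hq : forall w, is_derive q w (F w (pic F x0 n w) - c)).
  { intros w. unfold q. apply (is_derive_minus (pic F x0 (S n)) (fun w => c * w)).
    apply (pic_deriv F B L Lu); auto. apply is_derive_lin. }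
  assert (Hcl := comp_lip F B L Lu (pic F x0 n) HF (pic_lip F B L Lu x0 HF n) t).
  assert (Hhh : h * h = Rabs h * Rabs h) by (rewrite <- Rabs_mult; rewrite Rabs_right; nra).
  replace (pic F x0 (S n) (t + h) - pic F x0 (S n) t - c * h) with (q (t + h) - q t)
    by (unfold q; ring).
  destruct (Rle_dec 0 h).
  - rewrite Hhh. rewrite (Rabs_right h) by lra.
    replace ((Lu + L * B) * (h * h)) with ((Lu + L * B) * h * ((t + h) - t)) by ring.
    apply (mvb q (fun w => F w (pic F x0 n w) - c)). lra. auto.
    intros w Hw. eapply Rle_trans. apply Hcl. apply Rmult_le_compat_l. nra.
    rewrite Rabs_right; lra.
  - rewrite Hhh. rewrite (Rabs_left h) by lra. rewrite Rabs_minus_sym.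
    replace ((Lu + L * B) * (- h * - h)) with ((Lu + L * B) * (- h) * (t - (t + h))) by ring.
    apply (mvb q (fun w => F w (pic F x0 n w) - c)). lra. auto.
    intros w Hw. eapply Rle_trans. apply Hcl. apply Rmult_le_compat_l. nra.
    rewrite Rabs_left1; lra.
Qed.

Lemma sol_deriv F B L Lu x0 : Fhyp F B L Lu ->
  forall t, is_derive (sol F x0) t (F t (sol F x0 t)).
Proof.
  intros HF t. pose proof HF as (HL0 & HB0 & HLu0 & HB & HL & HU).
  apply (deriv_quad _ _ _ (Lu + L * B)). intros h.
  set (A := 2 * (B / (2 * L))).
  assert (HA : 0 <= A) by (unfold A; apply Rmult_le_pos; [lra|apply Rdiv_le_0_compat; lra]).
  set (E1 := exp (2 * L * Rabs (t + h))). set (E0 := exp (2 * L * Rabs t)).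
  assert (0 < E1) by apply exp_pos. assert (0 < E0) by apply exp_pos.
  apply (lim_half _ _ (A * E1 + A * E0 + Rabs h * L * A * E0)). intros n.
  assert (H1 := pic_step F B L Lu x0 HF n t h).
  assert (H2 := sol_bound F B L Lu x0 HF (S n) (t + h)).
  assert (H3 := sol_bound F B L Lu x0 HF (S n) t).
  assert (H4 := sol_bound F B L Lu x0 HF n t).
  assert (H5 := HL t (sol F x0 t) (pic F x0 n t)).
  fold A E0 E1 in H2, H3, H4.
  replace (sol F x0 (t + h) - sol F x0 t - F t (sol F x0 t) * h) with
    ((pic F x0 (S n) (t + h) - pic F x0 (S n) t - F t (pic F x0 n t) * h)
     + (sol F x0 (t + h) - pic F x0 (S n) (t + h))
     - (sol F x0 t - pic F x0 (S n) t)
     - (F t (sol F x0 t) - F t (pic F x0 n t)) * h) by ring.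
  assert (Hp : 0 < (/2)^n) by (apply pow_lt; lra).
  simpl pow in H2, H3.
  assert (Habs : forall a b c d, Rabs (a + b - c - d) <= Rabs a + Rabs b + Rabs c + Rabs d).
  { intros. unfold Rminus. eapply Rle_trans. apply Rabs_triang. rewrite Rabs_Ropp.
    eapply Rle_trans. apply Rplus_le_compat_r. apply Rabs_triang. rewrite Rabs_Ropp.
    eapply Rle_trans. apply Rplus_le_compat_r. apply Rplus_le_compat_r. apply Rabs_triang. lra. }
  eapply Rle_trans. apply Habs.
  rewrite Rabs_mult.
  assert (Rabs (F t (sol F x0 t) - F t (pic F x0 n t)) * Rabs h <= L * (A * (/2)^n * E0) * Rabs h).
  { apply Rmult_le_compat_r. apply Rabs_pos. eapply Rle_trans. apply H5.
    apply Rmult_le_compat_l; lra. }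
  assert (0 <= Rabs h) by apply Rabs_pos.
  set (p := (/2)^n) in *.
  assert (0 <= A * E1 * p). { apply Rmult_le_pos. apply Rmult_le_pos. lra. lra. lra. }
  assert (0 <= A * E0 * p). { apply Rmult_le_pos. apply Rmult_le_pos. lra. lra. lra. }
  lra.
Qed.

Definition clip (K x : R) := Rmax (- K) (Rmin K x).

Lemma clip_bound K x : 0 <= K -> Rabs (clip K x) <= K.
Proof. intros. unfold clip, Rmax, Rmin.
  destruct (Rle_dec K x); destruct (Rle_dec (-K) _); apply Rabs_le; lra. Qed.

Lemma clip_lip K x y : 0 <= K -> Rabs (clip K x - clip K y) <= Rabs (x - y).
Proof. intros. unfold clip, Rmax, Rmin.
  destruct (Rle_dec K x); destruct (Rle_dec K y);
  repeat match goal with |- context [Rle_dec ?a ?b] => destruct (Rle_dec a b) end;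
  apply Rabs_le; apply Rabs_le_between in H0 || idtac;
  unfold Rabs; repeat match goal with |- context [Rcase_abs ?a] => destruct (Rcase_abs a) end; lra.
Qed.

Lemma clip_id K x : Rabs x <= K -> clip K x = x.
Proof. intros H. apply Rabs_le_between in H. unfold clip, Rmax, Rmin.
  destruct (Rle_dec K x); destruct (Rle_dec (-K) _); lra. Qed.

Lemma gq_lip K a b : Rabs a <= K -> Rabs b <= K ->
  Rabs (a * Rabs a - b * Rabs b) <= 2 * K * Rabs (a - b).
Proof.
  intros Ha Hb. apply Rabs_le_between in Ha. apply Rabs_le_between in Hb.
  destruct (Rle_dec 0 a); destruct (Rle_dec 0 b);
  [rewrite (Rabs_right a), (Rabs_right b) by lra|rewrite (Rabs_right a), (Rabs_left b) by lra|
   rewrite (Rabs_left a), (Rabs_right b) by lra|rewrite (Rabs_left a), (Rabs_left b) by lra];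
  (destruct (Rle_dec 0 (a - b)); [rewrite (Rabs_right (a - b)) by lra|rewrite (Rabs_left (a - b)) by lra]);
  apply Rabs_le; split; nra.
Qed.

Lemma cos_lip u v : Rabs (cos u - cos v) <= Rabs (u - v).
Proof.
  assert (Hd : forall t, is_derive cos t (- sin t)) by (intros; auto_derive; auto; ring).
  destruct (Rle_dec v u).
  - rewrite (Rabs_right (u - v)) by lra. rewrite <- (Rmult_1_l (u - v)).
    apply (mvb cos (fun t => - sin t)); auto. intros t _. rewrite Rabs_Ropp.
    pose proof (SIN_bound t). apply Rabs_le; lra.
  - rewrite (Rabs_left (u - v)) by lra. rewrite Rabs_minus_sym.
    replace (- (u - v)) with (1 * (v - u)) by ring.
    apply (mvb cos (fun t => - sin t)); auto. lra. intros t _. rewrite Rabs_Ropp.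
    pose proof (SIN_bound t). apply Rabs_le; lra.
Qed.

Definition Kb (lam : R) := Rabs lam + 3.
Definition Fc (eps lam : R) (u x : R) :=
  eps * clip (Kb lam) x + cos u - clip (Kb lam) x * Rabs (clip (Kb lam) x) + lam.

Lemma Fc_hyp eps lam : 0 <= eps <= 1 ->
  Fhyp (Fc eps lam) (eps * Kb lam + 1 + Kb lam * Kb lam + Rabs lam) (eps + 2 * Kb lam + 1) 1.
Proof.
  intros He. assert (HK : 3 <= Kb lam) by (unfold Kb; pose proof (Rabs_pos lam); lra).
  unfold Fhyp. repeat split.
  - lra.
  - pose proof (Rabs_pos lam). nra.
  - lra.
  - intros u x. unfold Fc. set (c := clip (Kb lam) x).
    assert (Hc : Rabs c <= Kb lam) by (apply clip_bound; lra).
    pose proof (COS_bound u). pose proof (Rabs_pos lam). pose proof (Rabs_pos c).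
    assert (Hq1 : Rabs (c * Rabs c) <= Kb lam * Kb lam).
    { rewrite Rabs_mult, Rabs_Rabsolu. nra. }
    assert (Hq2 : Rabs (eps * c) <= eps * Kb lam).
    { rewrite Rabs_mult, (Rabs_right eps) by lra. nra. }
    assert (Hq3 : Rabs lam <= Rabs lam) by lra.
    apply Rabs_le_between in Hq1. apply Rabs_le_between in Hq2. apply Rabs_le_between in Hq3.
    apply Rabs_le; lra.
  - intros u x y. unfold Fc. set (cx := clip (Kb lam) x). set (cy := clip (Kb lam) y).
    assert (Hx : Rabs cx <= Kb lam) by (apply clip_bound; lra).
    assert (Hy : Rabs cy <= Kb lam) by (apply clip_bound; lra).
    assert (Hl : Rabs (cx - cy) <= Rabs (x - y)) by (apply clip_lip; lra).
    assert (Hg := gq_lip _ _ _ Hx Hy).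
    replace (eps * cx + cos u - cx * Rabs cx + lam - (eps * cy + cos u - cy * Rabs cy + lam))
      with (eps * (cx - cy) - (cx * Rabs cx - cy * Rabs cy)) by ring.
    eapply Rle_trans. apply Rabs_triang. rewrite Rabs_Ropp, Rabs_mult, (Rabs_right eps) by lra.
    pose proof (Rabs_pos (cx - cy)). nra.
  - intros u v x. unfold Fc.
    replace (eps * clip (Kb lam) x + cos u - clip (Kb lam) x * Rabs (clip (Kb lam) x) + lam -
      (eps * clip (Kb lam) x + cos v - clip (Kb lam) x * Rabs (clip (Kb lam) x) + lam))
    with (cos u - cos v) by ring. rewrite Rmult_1_l. apply cos_lip.
Qed.

Lemma is_derive_wexp (w f : R -> R) (t dw df : R) :
  is_derive w t dw -> is_derive f t df ->
  is_derive (fun t => w t * exp (f t)) t ((dw + w t * df) * exp (f t)).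
Proof.
  intros Hw Hf.
  assert (He : is_derive (fun t => exp (f t)) t (df * exp (f t))).
  { assert (H := is_derive_comp exp f t (exp (f t)) df). apply H.
    auto_derive; auto; ring. auto. }
  assert (H := is_derive_mult w (fun t => exp (f t)) t dw (df * exp (f t)) Hw He).
  replace ((dw + w t * df) * exp (f t)) with
    (plus (mult dw (exp (f t))) (mult (w t) (df * exp (f t)))).
  apply H. intros; unfold mult; simpl; ring.
  unfold plus, mult; simpl; ring.
Qed.

Lemma is_derive_oppR (f : R -> R) t l : is_derive f t l -> is_derive (fun t => - f t) t (- l).
Proof. intros H. exact (is_derive_opp f t l H). Qed.

Lemma is_derive_sq (y : R -> R) t dy : is_derive y t dy ->
  is_derive (fun t => y t * y t) t (2 * y t * dy).
Proof.
  intros H. assert (H2 := is_derive_mult y y t dy dy H H).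
  replace (2 * y t * dy) with (plus (mult dy (y t)) (mult (y t) dy)).
  apply H2. intros; unfold mult; simpl; ring. unfold plus, mult; simpl; ring.
Qed.

Lemma dep_sol (F : R -> R -> R) (L : R) (y1 y2 : R -> R) : 0 < L ->
  (forall u x y, Rabs (F u x - F u y) <= L * Rabs (x - y)) ->
  (forall t, is_derive y1 t (F t (y1 t))) -> (forall t, is_derive y2 t (F t (y2 t))) ->
  forall t, (y1 t - y2 t) * (y1 t - y2 t) <= (y1 0 - y2 0) * (y1 0 - y2 0) * exp (2 * L * Rabs t).
Proof.
  intros HL0 HL H1 H2 t.
  set (d := fun t => y1 t - y2 t).
  assert (Hd : forall t, is_derive d t (F t (y1 t) - F t (y2 t))).
  { intros s. apply (is_derive_minus y1 y2); auto. }
  assert (Hw : forall t, is_derive (fun t => d t * d t) t (2 * d t * (F t (y1 t) - F t (y2 t)))).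
  { intros s. apply is_derive_sq; auto. }
  assert (Hb : forall s, Rabs (2 * d s * (F s (y1 s) - F s (y2 s))) <= 2 * L * (d s * d s)).
  { intros s. rewrite !Rabs_mult. rewrite (Rabs_right 2) by lra.
    specialize (HL s (y1 s) (y2 s)). fold (d s) in HL.
    assert (d s * d s = Rabs (d s) * Rabs (d s)) by (rewrite <- Rabs_mult; rewrite Rabs_right; nra).
    pose proof (Rabs_pos (d s)). nra. }
  change ((d t) * (d t) <= (d 0) * (d 0) * exp (2 * L * Rabs t)).
  destruct (Rle_dec 0 t).
  - rewrite (Rabs_right t) by lra.
    assert (Hm := mono_deriv (fun s => - (d s * d s * exp (- (2 * L) * s)))
      (fun s => - ((2 * d s * (F s (y1 s) - F s (y2 s)) + d s * d s * (- (2 * L))) * exp (- (2 * L) * s))) 0 t r).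
    cbv beta in Hm. rewrite Rmult_0_r, exp_0, Rmult_1_r in Hm.
    assert (d t * d t * exp (- (2 * L) * t) <= d 0 * d 0).
    { apply Ropp_le_cancel. apply Hm.
      - intros s _. apply is_derive_oppR.
        apply (is_derive_wexp (fun s => d s * d s) (fun s => - (2 * L) * s)). apply Hw. apply is_derive_lin.
      - intros s _. specialize (Hb s). apply Rabs_le_between in Hb.
        assert (0 < exp (- (2 * L) * s)) by apply exp_pos. nra. }
    assert (exp (- (2 * L) * t) * exp (2 * L * t) = 1).
    { rewrite <- exp_plus. replace (- (2 * L) * t + 2 * L * t) with 0 by ring. apply exp_0. }
    assert (0 < exp (2 * L * t)) by apply exp_pos.
    assert (d t * d t * exp (- (2 * L) * t) * exp (2 * L * t) <= d 0 * d 0 * exp (2 * L * t)) by nra.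
    nra.
  - rewrite (Rabs_left t) by lra.
    assert (Hm := mono_deriv (fun s => d s * d s * exp ((2 * L) * s))
      (fun s => ((2 * d s * (F s (y1 s) - F s (y2 s)) + d s * d s * (2 * L)) * exp ((2 * L) * s))) t 0 ltac:(lra)).
    cbv beta in Hm. rewrite Rmult_0_r, exp_0, Rmult_1_r in Hm.
    assert (d t * d t * exp ((2 * L) * t) <= d 0 * d 0).
    { apply Hm.
      - intros s _.
        apply (is_derive_wexp (fun s => d s * d s) (fun s => (2 * L) * s)). apply Hw. apply is_derive_lin.
      - intros s _. specialize (Hb s). apply Rabs_le_between in Hb.
        assert (0 < exp ((2 * L) * s)) by apply exp_pos. nra. }
    assert (exp ((2 * L) * t) * exp (2 * L * - t) = 1).
    { rewrite <- exp_plus. replace ((2 * L) * t + 2 * L * - t) with 0 by ring. apply exp_0. }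
    assert (0 < exp (2 * L * - t)) by apply exp_pos.
    assert (d t * d t * exp ((2 * L) * t) * exp (2 * L * - t) <= d 0 * d 0 * exp (2 * L * - t)) by nra.
    nra.
Qed.

Lemma is_derive_ppc (E : R -> R) t e : is_derive E t e ->
  is_derive (fun t => pp (E t)) t ((E t + Rabs (E t)) * e).
Proof.
  intros HE. assert (H := is_derive_comp pp E t (E t + Rabs (E t)) e (is_derive_pp (E t)) HE).
  replace ((E t + Rabs (E t)) * e) with (scal e (E t + Rabs (E t))). apply H.
  unfold scal; simpl; unfold mult; simpl; ring.
Qed.

Lemma pp_zero_le x : pp x <= 0 -> x <= 0.
Proof. intros H. destruct (Rle_dec x 0); auto. rewrite pp_pos in H by lra. nra. Qed.

Lemma Kb_prop lam eps : 0 <= eps <= 1 ->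
  eps * Kb lam + 1 - Kb lam * Kb lam + Rabs lam < 0.
Proof. intros He. unfold Kb. pose proof (Rabs_pos lam). nra. Qed.

Lemma inv_sol eps lam x0 : 0 <= eps <= 1 -> Rabs x0 <= Kb lam ->
  forall t, 0 <= t -> Rabs (sol (Fc eps lam) x0 t) <= Kb lam.
Proof.
  intros He Hx t Ht.
  assert (HF := Fc_hyp eps lam He).
  set (y := sol (Fc eps lam) x0).
  assert (Hy : forall t, is_derive y t (Fc eps lam t (y t))) by (intros; apply (sol_deriv _ _ _ _ x0 HF)).
  assert (Hy0 : y 0 = x0) by (apply (sol_0 _ _ _ _ x0 HF)).
  set (K := Kb lam) in *.
  assert (HK : 3 <= K) by (unfold K, Kb; pose proof (Rabs_pos lam); lra).
  assert (HKp := Kb_prop lam eps He). fold K in HKp.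
  pose proof (Rabs_le_between lam (Rabs lam)) as [Hl _]. specialize (Hl (Rle_refl _)).
  apply Rabs_le_between in Hx.
  apply Rabs_le_between. split.
  - assert (Hm := mono_deriv (fun s => - pp (- K - y s))
      (fun s => - ((- K - y s + Rabs (- K - y s)) * (- Fc eps lam s (y s)))) 0 t Ht).
    cbv beta in Hm.
    assert (pp (- K - y t) <= pp (- K - y 0)).
    { apply Ropp_le_cancel. apply Hm.
      - intros s _. apply is_derive_oppR. apply (is_derive_ppc (fun s => - K - y s)).
        replace (- Fc eps lam s (y s)) with (0 - Fc eps lam s (y s)) by ring.
        apply (is_derive_minus (fun _ => - K) y). apply is_derive_cR. apply Hy.
      - intros s _. destruct (Rle_dec (- K - y s) 0).
        + rewrite Rabs_left1 by lra. lra.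
        + rewrite Rabs_right by lra.
          assert (Hc : clip K (y s) = - K).
          { unfold clip, Rmin, Rmax. destruct (Rle_dec K (y s)); try lra.
            destruct (Rle_dec (- K) (y s)); lra. }
          unfold Fc. fold K. rewrite Hc. rewrite Rabs_Ropp, Rabs_right by lra.
          pose proof (COS_bound s). nra. }
    rewrite Hy0 in H. rewrite (pp_neg (- K - x0)) in H by lra. apply pp_zero_le in H. lra.
  - assert (Hm := mono_deriv (fun s => - pp (y s - K))
      (fun s => - ((y s - K + Rabs (y s - K)) * (Fc eps lam s (y s)))) 0 t Ht).
    cbv beta in Hm.
    assert (pp (y t - K) <= pp (y 0 - K)).
    { apply Ropp_le_cancel. apply Hm.
      - intros s _. apply is_derive_oppR. apply (is_derive_ppc (fun s => y s - K)).
        replace (Fc eps lam s (y s)) with (Fc eps lam s (y s) - 0) by ring.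
        apply (is_derive_minus y (fun _ => K)). apply Hy. apply is_derive_cR.
      - intros s _. destruct (Rle_dec (y s - K) 0).
        + rewrite Rabs_left1 by lra. lra.
        + rewrite Rabs_right by lra.
          assert (Hc : clip K (y s) = K).
          { unfold clip, Rmin, Rmax. destruct (Rle_dec K (y s)); try lra.
            destruct (Rle_dec (- K) K); lra. }
          unfold Fc. fold K. rewrite Hc. rewrite Rabs_right by lra.
          pose proof (COS_bound s). nra. }
    rewrite Hy0 in H. rewrite (pp_neg (x0 - K)) in H by lra. apply pp_zero_le in H. lra.
Qed.

Lemma sq_le_abs a b : 0 <= b -> a * a <= b * b -> Rabs a <= b.
Proof. intros Hb H. destruct (Rle_dec (Rabs a) b); auto. exfalso.
  assert (a * a = Rabs a * Rabs a) by (rewrite <- Rabs_mult; rewrite Rabs_right; nra). nra. Qed.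

Lemma sqr_abs x : x * x = Rabs x * Rabs x.
Proof. rewrite <- Rabs_mult. rewrite Rabs_right. auto. apply Rle_ge, Rle_0_sqr. Qed.

Lemma is_derive_shift (f : R -> R) c t l : is_derive f (t + c) l -> is_derive (fun t => f (t + c)) t l.
Proof.
  intros H. assert (H2 := is_derive_comp f (fun t => t + c) t l 1 H).
  replace l with (scal 1 l). apply H2. auto_derive; auto; ring.
  unfold scal; simpl; unfold mult; simpl; ring.
Qed.

Lemma cos_2PI_plus t : cos (t + 2 * PI) = cos t.
Proof. rewrite cos_plus, cos_2PI, sin_2PI. ring. Qed.

Lemma exist_per eps lam : 0 <= eps <= 1 ->
  exists b : R -> R, (forall u, b (u + 2 * PI) = b u) /\ (forall u, Rabs (b u) <= Kb lam) /\
    (forall u, is_derive b u (rhs eps lam u (b u))).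
Proof.
  intros He. assert (HF := Fc_hyp eps lam He).
  set (K := Kb lam) in *. set (L := eps + 2 * K + 1) in *.
  assert (HK : 3 <= K) by (unfold K, Kb; pose proof (Rabs_pos lam); lra).
  pose proof HF as (HL0 & _ & _ & _ & HL & _).
  set (P := fun x => sol (Fc eps lam) x (2 * PI) - x).
  assert (Hdep : forall x y, Rabs (sol (Fc eps lam) x (2 * PI) - sol (Fc eps lam) y (2 * PI))
     <= Rabs (x - y) * exp (L * (2 * PI))).
  { intros x y. apply sq_le_abs. apply Rmult_le_pos. apply Rabs_pos. apply Rlt_le, exp_pos.
    assert (H := dep_sol (Fc eps lam) L (sol (Fc eps lam) x) (sol (Fc eps lam) y) HL0 HL
       (sol_deriv _ _ _ _ x HF) (sol_deriv _ _ _ _ y HF) (2 * PI)).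
    rewrite (sol_0 _ _ _ _ x HF), (sol_0 _ _ _ _ y HF) in H.
    rewrite (Rabs_right (2 * PI)) in H by (pose proof PI_RGT_0; lra).
    assert (exp (2 * L * (2 * PI)) = exp (L * (2 * PI)) * exp (L * (2 * PI))).
    { rewrite <- exp_plus. f_equal. ring. }
    rewrite (sqr_abs (x - y)) in H.
    nra. }
  assert (Hcont : continuity P).
  { intros x. apply (contpt_of_lip P x (exp (L * (2 * PI)) + 1)). intros y.
    unfold P. specialize (Hdep y x).
    replace (sol (Fc eps lam) y (2 * PI) - y - (sol (Fc eps lam) x (2 * PI) - x)) with
      ((sol (Fc eps lam) y (2 * PI) - sol (Fc eps lam) x (2 * PI)) - (y - x)) by ring.
    eapply Rle_trans. apply Rabs_triang. rewrite Rabs_Ropp. lra. }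
  assert (H2pi : 0 <= 2 * PI) by (pose proof PI_RGT_0; lra).
  assert (HPm : 0 <= P (- K)).
  { unfold P. assert (H := inv_sol eps lam (- K) He). fold K in H.
    assert (Rabs (- K) <= K) by (rewrite Rabs_Ropp, Rabs_right; lra).
    specialize (H H0 (2 * PI) H2pi). apply Rabs_le_between in H. lra. }
  assert (HPp : P K <= 0).
  { unfold P. assert (H := inv_sol eps lam K He). fold K in H.
    assert (Rabs K <= K) by (rewrite Rabs_right; lra).
    specialize (H H0 (2 * PI) H2pi). apply Rabs_le_between in H. lra. }
  destruct (IVT_cor P (- K) K Hcont ltac:(lra) ltac:(nra)) as [xs [Hxs HPx]].
  set (b := sol (Fc eps lam) xs).
  assert (Hb : forall t, is_derive b t (Fc eps lam t (b t))) by (intros; apply (sol_deriv _ _ _ _ xs HF)).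
  assert (Hb0 : b 0 = xs) by (apply (sol_0 _ _ _ _ xs HF)).
  assert (Hper : forall u, b (u + 2 * PI) = b u).
  { intros u.
    assert (Hz : forall t, is_derive (fun t => b (t + 2 * PI)) t (Fc eps lam t (b (t + 2 * PI)))).
    { intros t. apply is_derive_shift. replace (Fc eps lam t (b (t + 2 * PI))) with
        (Fc eps lam (t + 2 * PI) (b (t + 2 * PI))). apply Hb.
      unfold Fc. rewrite cos_2PI_plus. auto. }
    assert (H := dep_sol (Fc eps lam) L (fun t => b (t + 2 * PI)) b HL0 HL Hz Hb u).
    cbv beta in H. rewrite Rplus_0_l, Hb0 in H.
    assert (b (2 * PI) = xs) by (unfold P in HPx; fold b in HPx; lra).
    rewrite H0, Rminus_eq_0, !Rmult_0_l in H.
    assert (Hsq : 0 <= (b (u + 2 * PI) - b u) * (b (u + 2 * PI) - b u)) by apply Rle_0_sqr.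
    assert (Hz0 : (b (u + 2 * PI) - b u) * (b (u + 2 * PI) - b u) = 0) by lra.
    apply Rmult_integral in Hz0. lra. }
  assert (Hbd : forall u, Rabs (b u) <= K).
  { intros u. destruct (per_red b (2 * PI) ltac:(pose proof PI_RGT_0; lra) Hper u) as [r [Hr Hbr]].
    rewrite Hbr. apply (inv_sol eps lam xs He). fold K. apply Rabs_le; split; lra. lra. }
  exists b. split; [auto | split; [auto|]].
  intros u. replace (rhs eps lam u (b u)) with (Fc eps lam u (b u)). apply Hb.
  unfold Fc, rhs. fold K. rewrite clip_id; auto.
Qed.

Definition perb eps lam (b : R -> R) :=
  (forall u, b (u + 2 * PI) = b u) /\ (forall u, Rabs (b u) <= Kb lam) /\
  (forall u, is_derive b u (rhs eps lam u (b u))).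

Definition Bd eps lam := eps * Kb lam + 1 + Kb lam * Kb lam + Rabs lam.

Lemma rhs_bound eps lam u x : 0 <= eps -> Rabs x <= Kb lam -> Rabs (rhs eps lam u x) <= Bd eps lam.
Proof.
  intros He Hx. unfold rhs, Bd.
  pose proof (COS_bound u). pose proof (Rabs_pos lam). pose proof (Rabs_pos x).
  assert (Hq1 : Rabs (x * Rabs x) <= Kb lam * Kb lam).
  { rewrite Rabs_mult, Rabs_Rabsolu. nra. }
  assert (Hq2 : Rabs (eps * x) <= eps * Kb lam).
  { rewrite Rabs_mult, (Rabs_right eps) by lra. nra. }
  assert (Hq3 : Rabs lam <= Rabs lam) by lra.
  apply Rabs_le_between in Hq1. apply Rabs_le_between in Hq2. apply Rabs_le_between in Hq3.
  apply Rabs_le; split; lra.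
Qed.

Lemma perb_lip eps lam b : 0 <= eps -> perb eps lam b ->
  forall u v, Rabs (b v - b u) <= Bd eps lam * Rabs (v - u).
Proof.
  intros He (Hp & Hk & Hd) u v.
  destruct (Rle_dec u v).
  - rewrite (Rabs_right (v - u)) by lra. apply (mvb b (fun t => rhs eps lam t (b t))); auto.
    intros t _. apply rhs_bound; auto.
  - rewrite (Rabs_left (v - u)) by lra. rewrite Rabs_minus_sym.
    replace (- (v - u)) with (u - v) by ring.
    apply (mvb b (fun t => rhs eps lam t (b t))); auto. lra.
    intros t _. apply rhs_bound; auto.
Qed.

Lemma const0 (h : R -> R) : (forall t, is_derive h t 0) -> forall u, h u = h 0.
Proof.
  intros Hd u.
  assert (H1 : forall a c, a <= c -> h a <= h c).
  { intros a c Hac. apply (mono_deriv h (fun _ => 0)); auto. intros; lra. }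
  assert (H2 : forall a c, a <= c -> - h a <= - h c).
  { intros a c Hac. apply (mono_deriv (fun t => - h t) (fun _ => - 0)); auto.
    intros. apply is_derive_oppR. auto. intros; lra. }
  destruct (Rle_dec 0 u).
  - specialize (H1 0 u r). specialize (H2 0 u r). lra.
  - specialize (H1 u 0 ltac:(lra)). specialize (H2 u 0 ltac:(lra)). lra.
Qed.

Definition Phi (b : R -> R) u := 0 + RInt (fun v => Rabs (b v)) 0 u.

Lemma Phi_deriv eps lam b : 0 <= eps -> perb eps lam b -> forall u, is_derive (Phi b) u (Rabs (b u)).
Proof.
  intros He Hb u. unfold Phi.
  apply (deriv_prim (fun v => Rabs (b v)) 0 (Bd eps lam)).
  intros x y. eapply Rle_trans. apply Rabs_triang_inv2. apply (perb_lip eps lam b He Hb).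
Qed.

Lemma Phi_0 b : Phi b 0 = 0.
Proof. unfold Phi. rewrite RInt_point. unfold zero; simpl. ring. Qed.

Lemma Phi_per eps lam b : 0 <= eps -> perb eps lam b -> forall u, Phi b (u + 2 * PI) - Phi b u = Phi b (2 * PI).
Proof.
  intros He Hb u. pose proof Hb as (Hp & _ & _).
  assert (H := const0 (fun u => Phi b (u + 2 * PI) - Phi b u)).
  cbv beta in H. rewrite H. rewrite Rplus_0_l, Phi_0. ring.
  intros t. replace 0 with (Rabs (b (t + 2 * PI)) - Rabs (b t)) by (rewrite Hp; ring).
  apply (is_derive_minus (fun u => Phi b (u + 2 * PI)) (Phi b)).
  apply is_derive_shift. apply (Phi_deriv eps lam b He Hb). apply (Phi_deriv eps lam b He Hb).
Qed.

Lemma Phi_mono eps lam b : 0 <= eps -> perb eps lam b -> forall a c, a <= c -> Phi b a <= Phi b c.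
Proof.
  intros He Hb a c Hac. apply (mono_deriv (Phi b) (fun u => Rabs (b u))); auto.
  intros; apply (Phi_deriv eps lam b He Hb). intros; apply Rabs_pos.
Qed.

Lemma neg_abs_le x : - Rabs x <= x.
Proof. pose proof (Rle_abs (- x)). rewrite Rabs_Ropp in H. lra. Qed.

Lemma is_derive_sin t : is_derive sin t (cos t).
Proof. auto_derive; auto; ring. Qed.

Lemma Phi_low eps lam b : 0 <= eps <= 1/100000 -> perb eps lam b -> 1/5500 <= Phi b (2 * PI).
Proof.
  intros He Hb. pose proof Hb as (Hp & Hk & Hd).
  assert (HPI := PI2_3_2). assert (HPI4 := PI_4).
  assert (Hpd := Phi_deriv eps lam b ltac:(lra) Hb).
  assert (HP0 := Phi_0 b).
  assert (Hb2 : b (2 * PI) = b 0) by (rewrite <- (Rplus_0_l (2 * PI)); apply Hp).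
  destruct (Rle_dec 4 lam) as [Hl|Hl].
  - assert (HK : Kb lam = lam + 3) by (unfold Kb; rewrite Rabs_right; lra).
    set (J := fun u => b u + (Kb lam + eps) * Phi b u - sin u - lam * u).
    assert (HJ : J 0 <= J (2 * PI)).
    { apply (mono_deriv J (fun u => rhs eps lam u (b u) + (Kb lam + eps) * Rabs (b u) - cos u - lam)).
      lra.
      - intros t _. unfold J.
        apply (is_derive_minus (fun u => b u + (Kb lam + eps) * Phi b u - sin u) (fun u => lam * u)).
        apply (is_derive_minus (fun u => b u + (Kb lam + eps) * Phi b u) sin).
        apply (is_derive_plus b (fun u => (Kb lam + eps) * Phi b u)). apply Hd.
        apply (is_derive_scal (Phi b)). apply Hpd. apply is_derive_sin. apply is_derive_lin.
      - intros t _. unfold rhs. specialize (Hk t). pose proof (Rabs_pos (b t)).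
        assert (b t * Rabs (b t) <= Rabs (b t) * Rabs (b t)) by (apply Rmult_le_compat_r; [lra| apply Rle_abs]).
        assert (- (eps * Rabs (b t)) <= eps * b t).
        { assert (- Rabs (b t) <= b t) by (apply neg_abs_le). nra. }
        nra. }
    unfold J in HJ. rewrite HP0, sin_0, sin_2PI, Hb2 in HJ. rewrite HK in HJ.
    destruct (Rle_dec (1/5500) (Phi b (2 * PI))); auto.
    assert (0 <= Phi b (2 * PI)) by (rewrite <- HP0; apply (Phi_mono eps lam b ltac:(lra) Hb); lra).
    nra.
  - destruct (Rle_dec lam (-4)) as [Hl2|Hl2].
    + assert (HK : Kb lam = - lam + 3) by (unfold Kb; rewrite Rabs_left; lra).
      set (J := fun u => - b u + (Kb lam + eps) * Phi b u + sin u + lam * u).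
      assert (HJ : J 0 <= J (2 * PI)).
      { apply (mono_deriv J (fun u => - rhs eps lam u (b u) + (Kb lam + eps) * Rabs (b u) + cos u + lam)).
        lra.
        - intros t _. unfold J.
          apply (is_derive_plus (fun u => - b u + (Kb lam + eps) * Phi b u + sin u) (fun u => lam * u)).
          apply (is_derive_plus (fun u => - b u + (Kb lam + eps) * Phi b u) sin).
          apply (is_derive_plus (fun u => - b u) (fun u => (Kb lam + eps) * Phi b u)).
          apply is_derive_oppR. apply Hd.
          apply (is_derive_scal (Phi b)). apply Hpd. apply is_derive_sin. apply is_derive_lin.
        - intros t _. unfold rhs. specialize (Hk t). pose proof (Rabs_pos (b t)).
          assert (- (Rabs (b t) * Rabs (b t)) <= b t * Rabs (b t)).
          { assert (- Rabs (b t) <= b t) by (apply neg_abs_le). nra. }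
          assert (eps * b t <= eps * Rabs (b t)) by (apply Rmult_le_compat_l; [lra|apply Rle_abs]).
          nra. }
      unfold J in HJ. rewrite HP0, sin_0, sin_2PI, Hb2 in HJ. rewrite HK in HJ.
      destruct (Rle_dec (1/5500) (Phi b (2 * PI))); auto.
      assert (0 <= Phi b (2 * PI)) by (rewrite <- HP0; apply (Phi_mono eps lam b ltac:(lra) Hb); lra).
      nra.
    + assert (HK7 : Kb lam < 7) by (unfold Kb; apply Rabs_def1 in Hl2 || idtac;
        destruct (Rle_dec 0 lam); [rewrite Rabs_right|rewrite Rabs_left]; lra).
      assert (HK3 : 3 <= Kb lam) by (unfold Kb; pose proof (Rabs_pos lam); lra).
      assert (Hla : Rabs lam < 4) by (destruct (Rle_dec 0 lam); [rewrite Rabs_right|rewrite Rabs_left]; lra).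
      destruct (classic (exists u, 1/5 <= Rabs (b u))) as [[u1 Hu1]|Hno].
      * assert (HBd : Bd eps lam < 55) by (unfold Bd; nra).
        set (w := 1/550).
        assert (Hw : forall t, u1 <= t <= u1 + w -> 1/10 <= Rabs (b t)).
        { intros t Ht. assert (Hl1 := perb_lip eps lam b ltac:(lra) Hb u1 t).
          rewrite (Rabs_right (t - u1)) in Hl1 by lra.
          assert (Bd eps lam * (t - u1) <= 55 * w).
          { assert (0 <= Bd eps lam) by (unfold Bd; pose proof (Rabs_pos lam); nra). unfold w in *. nra. }
          pose proof (Rabs_triang_inv (b u1) (b t)). rewrite Rabs_minus_sym in Hl1. unfold w in *. lra. }
        assert (H1 : Phi b u1 - 1/10 * u1 <= Phi b (u1 + w) - 1/10 * (u1 + w)).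
        { apply (mono_deriv (fun t => Phi b t - 1/10 * t) (fun t => Rabs (b t) - 1/10)).
          unfold w; lra.
          intros t _. apply (is_derive_minus (Phi b) (fun t => 1/10 * t)). apply Hpd. apply is_derive_lin.
          intros t Ht. specialize (Hw t Ht). lra. }
        assert (H2 : Phi b (u1 + w) <= Phi b (u1 + 2 * PI)).
        { apply (Phi_mono eps lam b ltac:(lra) Hb). unfold w; lra. }
        assert (H3 := Phi_per eps lam b ltac:(lra) Hb u1).
        unfold w in *. lra.
      * exfalso.
        assert (Hs : forall u, Rabs (b u) < 1/5).
        { intros u. destruct (Rlt_dec (Rabs (b u)) (1/5)); auto. exfalso. apply Hno. exists u. lra. }
        set (h := fun u => b u - sin u - lam * u).
        assert (Hh : forall t, is_derive h t (rhs eps lam t (b t) - cos t - lam)).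
        { intros t. unfold h. apply (is_derive_minus (fun u => b u - sin u) (fun u => lam * u)).
          apply (is_derive_minus b sin). apply Hd. apply is_derive_sin. apply is_derive_lin. }
        assert (Hhb : forall t, Rabs (rhs eps lam t (b t) - cos t - lam) <= 1/20).
        { intros t. unfold rhs. specialize (Hs t).
          replace (eps * b t + cos t - b t * Rabs (b t) + lam - cos t - lam) with (eps * b t - b t * Rabs (b t)) by ring.
          eapply Rle_trans. apply Rabs_triang. rewrite Rabs_Ropp, !Rabs_mult, Rabs_Rabsolu, (Rabs_right eps) by lra.
          pose proof (Rabs_pos (b t)). nra. }
        assert (E1 := mvb h _ 0 (2 * PI) (1/20) ltac:(lra) (fun t _ => Hh t) (fun t _ => Hhb t)).
        assert (E2 := mvb h _ (- (PI/2)) (PI/2) (1/20) ltac:(lra) (fun t _ => Hh t) (fun t _ => Hhb t)).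
        unfold h in E1, E2. rewrite sin_2PI, sin_0, Hb2 in E1. rewrite sin_neg, sin_PI2 in E2.
        apply Rabs_le_between in E1. apply Rabs_le_between in E2.
        pose proof (Hs (PI/2)) as Hs1. pose proof (Hs (- (PI/2))) as Hs2.
        apply Rabs_lt_between in Hs1. apply Rabs_lt_between in Hs2.
        nra.
Qed.

Lemma phi_data eps lam b : 0 <= eps < 1/100000 -> perb eps lam b ->
  exists (phi : R -> R) (P g : R), 0 < g /\ 0 <= P /\ (forall u, Rabs (phi u) <= P) /\
    (forall u, is_derive phi u (4/3 * Rabs (b u) - 2 * eps - g)).
Proof.
  intros He Hb. pose proof Hb as (Hp & Hk & Hd).
  assert (HPI := PI2_3_2). assert (HPI4 := PI_4).
  assert (Hlow := Phi_low eps lam b ltac:(lra) Hb).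
  set (m := Phi b (2 * PI) / (2 * PI)).
  assert (Hm : 1/44000 <= m).
  { unfold m. apply Rmult_le_reg_r with (2 * PI). lra. unfold Rdiv at 2. rewrite Rmult_assoc, Rinv_l, Rmult_1_r by lra. nra. }
  set (phi := fun u => 4/3 * (Phi b u - m * u)).
  assert (Hpd : forall u, is_derive phi u (4/3 * Rabs (b u) - 2 * eps - (4/3 * m - 2 * eps))).
  { intros u. unfold phi. replace (4/3 * Rabs (b u) - 2 * eps - (4/3 * m - 2 * eps)) with (4/3 * (Rabs (b u) - m)) by ring.
    apply (is_derive_scal (fun u => Phi b u - m * u)).
    apply (is_derive_minus (Phi b) (fun u => m * u)). apply (Phi_deriv eps lam b ltac:(lra) Hb). apply is_derive_lin. }
  set (Dm := 4/3 * (Kb lam + m)).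
  assert (HK3 : 3 <= Kb lam) by (unfold Kb; pose proof (Rabs_pos lam); lra).
  exists phi, (Dm * (2 * PI)), (4/3 * m - 2 * eps). split; [lra|split; [unfold Dm; nra|split]]; auto.
  assert (Hper : forall u, phi (u + 2 * PI) = phi u).
  { intros u. unfold phi. assert (H := Phi_per eps lam b ltac:(lra) Hb u).
    assert (m * (2 * PI) = Phi b (2 * PI)) by (unfold m; field; lra). nra. }
  intros u. destruct (per_red phi (2 * PI) ltac:(lra) Hper u) as [r [Hr Hre]]. rewrite Hre.
  assert (H := mvb phi _ 0 r Dm ltac:(lra) (fun t _ => Hpd t)).
  assert (phi 0 = 0) by (unfold phi; rewrite Phi_0; ring).
  rewrite H0, Rminus_0_r, Rminus_0_r in H.
  eapply Rle_trans. apply H.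
  - intros t _. replace (4 / 3 * Rabs (b t) - 2 * eps - (4 / 3 * m - 2 * eps)) with (4/3 * (Rabs (b t) - m)) by ring.
    rewrite Rabs_mult, (Rabs_right (4/3)) by lra. unfold Dm. apply Rmult_le_compat_l. lra.
    specialize (Hk t). pose proof (Rabs_pos (b t)). apply Rabs_le; split; lra.
  - apply Rmult_le_compat_l. unfold Dm; lra. lra.
Qed.

Lemma exp_le_exp x y : x <= y -> exp x <= exp y.
Proof. intros H. destruct (Rle_lt_or_eq_dec x y H). left; apply exp_increasing; auto. subst; lra. Qed.

Lemma is_derive_shiftl (f : R -> R) c t l : is_derive f (c + t) l -> is_derive (fun t => f (c + t)) t l.
Proof.
  intros H. assert (H2 := is_derive_comp f (fun t => c + t) t l 1 H).
  replace l with (scal 1 l). apply H2. auto_derive; auto; ring.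
  unfold scal; simpl; unfold mult; simpl; ring.
Qed.

Lemma key_ineq y b : (2/3) * ((y - b) * (y - b)) * Rabs b <= (y - b) * (y * Rabs y - b * Rabs b).
Proof.
  assert (Hs : 0 <= (y - b) * (y - b)) by apply Rle_0_sqr.
  assert (HQ : 0 <= y * y + 2/3 * y * b + b * b / 3).
  { assert (0 <= (y + b/3) * (y + b/3)) by apply Rle_0_sqr.
    assert (0 <= b * b) by apply Rle_0_sqr. nra. }
  destruct (Rle_dec 0 y); destruct (Rle_dec 0 b);
  [rewrite (Rabs_right y), (Rabs_right b) by lra|rewrite (Rabs_right y), (Rabs_left b) by lra|
   rewrite (Rabs_left y), (Rabs_right b) by lra|rewrite (Rabs_left y), (Rabs_left b) by lra].
  - assert (0 <= (y - b) * (y - b) * (y + b / 3)) by (apply Rmult_le_pos; lra). nra.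
  - assert (0 <= (y - b) * (y * y + 2/3 * y * b + b * b / 3)) by (apply Rmult_le_pos; lra). nra.
  - assert (0 <= (b - y) * (y * y + 2/3 * y * b + b * b / 3)) by (apply Rmult_le_pos; lra). nra.
  - assert (0 <= (y - b) * (y - b) * (- y - b / 3)) by (apply Rmult_le_pos; lra). nra.
Qed.

Lemma lyap_core eps (b phi : R -> R) g s (w dw : R -> R) a c : a <= c ->
  (forall u, is_derive phi u (4/3 * Rabs (b u) - 2 * eps - g)) ->
  (forall t, a <= t <= c -> is_derive w t (dw t)) ->
  (forall t, a <= t <= c -> dw t <= w t * (2 * eps - 4/3 * Rabs (b (s + t)))) ->
  w c * exp (phi (s + c) + g * c) <= w a * exp (phi (s + a) + g * a).
Proof.
  intros Hac Hphi Hw Hdw.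
  apply Ropp_le_cancel.
  apply (mono_deriv (fun t => - (w t * exp (phi (s + t) + g * t)))
    (fun t => - ((dw t + w t * ((4/3 * Rabs (b (s + t)) - 2 * eps - g) + g)) * exp (phi (s + t) + g * t)))); auto.
  - intros t Ht. apply is_derive_oppR. apply (is_derive_wexp w (fun t => phi (s + t) + g * t)).
    apply Hw; auto.
    apply (is_derive_plus (fun t => phi (s + t)) (fun t => g * t)).
    apply is_derive_shiftl. apply Hphi. apply is_derive_lin.
  - intros t Ht. specialize (Hdw t Ht). assert (0 < exp (phi (s + t) + g * t)) by apply exp_pos.
    assert (dw t + w t * (4 / 3 * Rabs (b (s + t)) - 2 * eps - g + g) <= 0) by lra.
    nra.
Qed.

Lemma back_zero eps (b phi : R -> R) P g s (w dw : R -> R) W : 0 < g ->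
  (forall u, Rabs (phi u) <= P) ->
  (forall u, is_derive phi u (4/3 * Rabs (b u) - 2 * eps - g)) ->
  (forall t, is_derive w t (dw t)) ->
  (forall t, dw t <= w t * (2 * eps - 4/3 * Rabs (b (s + t)))) ->
  (forall t, 0 <= w t <= W) -> w 0 = 0.
Proof.
  intros Hg HP Hphi Hw Hdw HW.
  assert (H : w 0 * exp (phi s) <= 0).
  { apply (lim_exp0 _ (W * exp P) g Hg). intros t Ht.
    assert (H1 := lyap_core eps b phi g s w dw t 0 Ht Hphi (fun t _ => Hw t) (fun t _ => Hdw t)).
    rewrite Rplus_0_r, Rmult_0_r, Rplus_0_r in H1.
    eapply Rle_trans. apply H1. rewrite exp_plus.
    specialize (HW t). specialize (HP (s + t)). apply Rabs_le_between in HP.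
    assert (exp (phi (s + t)) <= exp P) by (apply exp_le_exp; lra).
    assert (0 < exp (phi (s + t))) by apply exp_pos. assert (0 < exp (g * t)) by apply exp_pos.
    assert (w t * exp (phi (s + t)) <= W * exp P).
    { apply Rmult_le_compat; lra. }
    nra. }
  assert (0 < exp (phi s)) by apply exp_pos. specialize (HW 0). nra.
Qed.

Lemma rhs_diff_ineq eps lam u y bb :
  2 * (y - bb) * (rhs eps lam u y - rhs eps lam u bb) <= (y - bb) * (y - bb) * (2 * eps - 4/3 * Rabs bb).
Proof.
  unfold rhs. pose proof (key_ineq y bb). nra.
Qed.

Lemma hyp_bound eps lam b phi P g s y : perb eps lam b -> 0 < g ->
  (forall u, Rabs (phi u) <= P) ->
  (forall u, is_derive phi u (4/3 * Rabs (b u) - 2 * eps - g)) ->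
  fwd_solution eps lam s y ->
  forall t, 0 <= t -> Rabs (y t - b (s + t)) <= exp P * exp (- (g / 2) * t) * Rabs (y 0 - b s).
Proof.
  intros (Hp & Hk & Hd) Hg HP Hphi Hy t Ht.
  set (d := fun t => y t - b (s + t)).
  assert (Hdd : forall t, 0 <= t -> is_derive d t (rhs eps lam (s + t) (y t) - rhs eps lam (s + t) (b (s + t)))).
  { intros t' Ht'. apply (is_derive_minus y (fun t => b (s + t))). apply Hy; auto.
    apply is_derive_shiftl. apply Hd. }
  assert (H1 := lyap_core eps b phi g s (fun t => d t * d t)
    (fun t => 2 * d t * (rhs eps lam (s + t) (y t) - rhs eps lam (s + t) (b (s + t)))) 0 t Ht Hphi).
  cbv beta in H1.
  assert (H2 : d t * d t * exp (phi (s + t) + g * t) <= d 0 * d 0 * exp (phi (s + 0) + g * 0)).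
  { apply H1.
    - intros t' Ht'. apply is_derive_sq. apply Hdd. lra.
    - intros t' Ht'. unfold d. apply rhs_diff_ineq. }
  rewrite Rplus_0_r, Rmult_0_r, Rplus_0_r in H2.
  apply sq_le_abs.
  { apply Rmult_le_pos. apply Rmult_le_pos; apply Rlt_le, exp_pos. apply Rabs_pos. }
  fold (d t). replace (y 0 - b s) with (d 0) by (unfold d; rewrite Rplus_0_r; auto).
  rewrite exp_plus in H2.
  assert (HP1 := HP (s + t)). assert (HP2 := HP s).
  apply Rabs_le_between in HP1. apply Rabs_le_between in HP2.
  assert (E1 : exp (- P) <= exp (phi (s + t))) by (apply exp_le_exp; lra).
  assert (E2 : exp (phi s) <= exp P) by (apply exp_le_exp; lra).
  assert (E3 : exp P * exp (- P) = 1) by (rewrite <- exp_plus; replace (P + - P) with 0 by ring; apply exp_0).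
  assert (E4 : exp (- (g / 2) * t) * exp (- (g / 2) * t) * exp (g * t) = 1).
  { rewrite <- !exp_plus. replace (- (g / 2) * t + - (g / 2) * t + g * t) with 0 by field. apply exp_0. }
  assert (Hpos1 := exp_pos (- P)). assert (Hpos2 := exp_pos (g * t)). assert (Hpos3 := exp_pos P).
  assert (Hpos4 := exp_pos (- (g / 2) * t)). assert (Hpos5 := exp_pos (phi s)).
  assert (Hs1 : 0 <= d t * d t) by apply Rle_0_sqr. assert (Hs0 : 0 <= d 0 * d 0) by apply Rle_0_sqr.
  assert (H3 : d t * d t * exp (- P) * exp (g * t) <= d 0 * d 0 * exp P).
  { assert (d t * d t * exp (- P) * exp (g * t) <= d t * d t * (exp (phi (s + t)) * exp (g * t))).
    { rewrite Rmult_assoc. apply Rmult_le_compat_l. auto. apply Rmult_le_compat_r; lra. }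
    assert (d 0 * d 0 * exp (phi s) <= d 0 * d 0 * exp P) by (apply Rmult_le_compat_l; lra).
    lra. }
  set (a := exp P) in *. set (c := exp (- (g / 2) * t)) in *. set (e := exp (g * t)) in *.
  set (q := exp (-P)) in *.
  replace (a * c * Rabs (d 0) * (a * c * Rabs (d 0))) with (d 0 * d 0 * a * (c * c) * a).
  2: { rewrite (sqr_abs (d 0)). ring. }
  assert (Hx : d t * d t = d t * d t * q * e * (a * (c * c))).
  { replace (d t * d t * q * e * (a * (c * c))) with (d t * d t * (a * q) * ((c * c) * e)) by ring.
    rewrite E3. replace (c * c * e) with 1 by lra. ring. }
  rewrite Hx.
  assert (0 <= a * (c * c)) by (apply Rmult_le_pos; [lra|apply Rle_0_sqr]).
  replace (d 0 * d 0 * a * (c * c) * a) with (d 0 * d 0 * a * (a * (c * c))) by ring.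
  apply Rmult_le_compat_r; auto.
Qed.

Lemma uniq_bounded eps lam b phi P g s y : perb eps lam b -> 0 < g ->
  (forall u, Rabs (phi u) <= P) ->
  (forall u, is_derive phi u (4/3 * Rabs (b u) - 2 * eps - g)) ->
  entire_solution eps lam s y -> (exists M, forall t, Rabs (y t) <= M) -> y 0 = b s.
Proof.
  intros Hb Hg HP Hphi Hy [M HM]. pose proof Hb as (Hp & Hk & Hd).
  set (d := fun t => y t - b (s + t)).
  assert (Hdd : forall t, is_derive d t (rhs eps lam (s + t) (y t) - rhs eps lam (s + t) (b (s + t)))).
  { intros t'. apply (is_derive_minus y (fun t => b (s + t))). apply Hy.
    apply is_derive_shiftl. apply Hd. }
  assert (Hw := back_zero eps b phi P g s (fun t => d t * d t)
    (fun t => 2 * d t * (rhs eps lam (s + t) (y t) - rhs eps lam (s + t) (b (s + t))))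
    ((M + Kb lam) * (M + Kb lam)) Hg HP Hphi).
  cbv beta in Hw.
  assert (d 0 * d 0 = 0).
  { apply Hw.
    - intros t. apply is_derive_sq. apply Hdd.
    - intros t. unfold d. apply rhs_diff_ineq.
    - intros t. split. apply Rle_0_sqr.
      assert (Rabs (d t) <= M + Kb lam).
      { unfold d. eapply Rle_trans. apply Rabs_triang. rewrite Rabs_Ropp.
        specialize (HM t). specialize (Hk (s + t)). lra. }
      rewrite sqr_abs. pose proof (Rabs_pos (d t)). nra. }
  apply Rmult_integral in H. unfold d in H. rewrite Rplus_0_r in H. lra.
Qed.

Lemma mono_lam eps lam1 lam2 b1 b2 phi P g : lam1 < lam2 ->
  perb eps lam1 b1 -> perb eps lam2 b2 -> 0 < g ->
  (forall u, Rabs (phi u) <= P) ->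
  (forall u, is_derive phi u (4/3 * Rabs (b2 u) - 2 * eps - g)) ->
  forall s, b1 s < b2 s.
Proof.
  intros Hl (Hp1 & Hk1 & Hd1) (Hp2 & Hk2 & Hd2) Hg HP Hphi.
  set (D := fun t => b1 t - b2 t).
  assert (HD : forall t, is_derive D t (rhs eps lam1 t (b1 t) - rhs eps lam2 t (b2 t))).
  { intros t. apply (is_derive_minus b1 b2); auto. }
  assert (Hle : forall s, D s <= 0).
  { intros s.
    assert (Hw := back_zero eps b2 phi P g s (fun t => pp (D (s + t)))
      (fun t => (D (s + t) + Rabs (D (s + t))) * (rhs eps lam1 (s + t) (b1 (s + t)) - rhs eps lam2 (s + t) (b2 (s + t))))
      ((Kb lam1 + Kb lam2) * (Kb lam1 + Kb lam2)) Hg HP Hphi).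
    cbv beta in Hw. rewrite Rplus_0_r in Hw. apply pp_zero_le. rewrite Hw. lra.
    - intros t. apply (is_derive_ppc (fun t => D (s + t))). apply is_derive_shiftl. apply HD.
    - intros t. set (u := s + t). destruct (Rle_dec (D u) 0).
      + rewrite pp_neg by auto. rewrite Rabs_left1 by auto. lra.
      + rewrite pp_pos by lra. rewrite Rabs_right by lra.
        assert (H := rhs_diff_ineq eps lam1 u (b1 u) (b2 u)). unfold D in *.
        replace (rhs eps lam2 u (b2 u)) with (rhs eps lam1 u (b2 u) + (lam2 - lam1)) by (unfold rhs; ring).
        nra.
    - intros t. split. apply pp_nonneg. set (u := s + t).
      destruct (Rle_dec (D u) 0). rewrite pp_neg by auto. pose proof (Rabs_pos lam1); pose proof (Rabs_pos lam2); unfold Kb; nra.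
      rewrite pp_pos by lra. assert (Rabs (D u) <= Kb lam1 + Kb lam2).
      { unfold D. eapply Rle_trans. apply Rabs_triang. rewrite Rabs_Ropp. specialize (Hk1 u). specialize (Hk2 u). lra. }
      rewrite sqr_abs. pose proof (Rabs_pos (D u)). nra. }
  intros s. destruct (Rlt_dec (b1 s) (b2 s)) as [|Hn]; auto. exfalso.
  assert (HDs : D s = 0) by (specialize (Hle s); unfold D in *; lra).
  assert (H0 := deriv_max_zero D s _ (HD s)). rewrite HDs in H0.
  specialize (H0 Hle). unfold D in HDs.
  assert (b1 s = b2 s) by lra. rewrite H in H0. unfold rhs in H0. lra.
Qed.

Lemma per_max (w dw : R -> R) s : (forall u, w (u + 2 * PI) = w u) ->
  (forall t, is_derive w t (dw t)) -> (forall t, dw t <= 0) -> forall t, w t <= w s.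
Proof.
  intros Hp Hd Hn t.
  assert (Hp' : forall u, (fun r => w (s + r)) (u + 2 * PI) = (fun r => w (s + r)) u).
  { intros u. cbv beta. replace (s + (u + 2 * PI)) with ((s + u) + 2 * PI) by ring. apply Hp. }
  destruct (per_red (fun r => w (s + r)) (2 * PI) ltac:(pose proof PI_RGT_0; lra) Hp' (t - s)) as [r [Hr Hwr]].
  cbv beta in Hwr. replace (s + (t - s)) with t in Hwr by ring. rewrite Hwr.
  apply Ropp_le_cancel.
  apply (mono_deriv (fun t => - w t) (fun t => - dw t)). lra.
  intros; apply is_derive_oppR; auto. intros x _. specialize (Hn x). lra.
Qed.

Lemma lim_up eps lam b M : 0 <= eps <= 1 -> perb eps lam b -> 0 <= M -> M * M + 3 <= lam ->
  forall s, M <= b s.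
Proof.
  intros He (Hp & Hk & Hd) HM Hl s.
  assert (Hr : forall u, b u < M -> 1 <= rhs eps lam u (b u)).
  { intros u Hu. unfold rhs. pose proof (COS_bound u). destruct (Rle_dec 0 (b u)).
    - rewrite Rabs_right by lra. nra.
    - rewrite Rabs_left by lra. nra. }
  set (w := fun t => pp (M - b t)).
  set (dw := fun t => (M - b t + Rabs (M - b t)) * (0 - rhs eps lam t (b t))).
  assert (Hwd : forall t, is_derive w t (dw t)).
  { intros t. apply (is_derive_ppc (fun t => M - b t)). apply (is_derive_minus (fun _ => M) b).
    apply is_derive_cR. apply Hd. }
  assert (Hn : forall t, dw t <= 0).
  { intros t. unfold dw. destruct (Rle_dec (M - b t) 0).
    - rewrite Rabs_left1 by auto. lra.
    - rewrite Rabs_right by lra. specialize (Hr t ltac:(lra)). nra. }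
  assert (Hmax := per_max w dw s ltac:(intros u; unfold w; rewrite Hp; auto) Hwd Hn).
  assert (H0 := deriv_max_zero w s _ (Hwd s) Hmax).
  unfold dw in H0. destruct (Rle_dec (M - b s) 0). lra.
  rewrite Rabs_right in H0 by lra. specialize (Hr s ltac:(lra)). nra.
Qed.

Lemma lim_down eps lam b M : 0 <= eps <= 1 -> perb eps lam b -> 0 <= M -> lam <= - (M * M + 3) ->
  forall s, b s <= - M.
Proof.
  intros He (Hp & Hk & Hd) HM Hl s.
  assert (Hr : forall u, - M < b u -> rhs eps lam u (b u) <= -1).
  { intros u Hu. unfold rhs. pose proof (COS_bound u). destruct (Rle_dec 0 (b u)).
    - rewrite Rabs_right by lra. nra.
    - rewrite Rabs_left by lra. nra. }
  set (w := fun t => pp (b t + M)).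
  set (dw := fun t => (b t + M + Rabs (b t + M)) * (rhs eps lam t (b t) + 0)).
  assert (Hwd : forall t, is_derive w t (dw t)).
  { intros t. apply (is_derive_ppc (fun t => b t + M)). apply (is_derive_plus b (fun _ => M)).
    apply Hd. apply is_derive_cR. }
  assert (Hn : forall t, dw t <= 0).
  { intros t. unfold dw. destruct (Rle_dec (b t + M) 0).
    - rewrite Rabs_left1 by auto. lra.
    - rewrite Rabs_right by lra. specialize (Hr t ltac:(lra)). nra. }
  assert (Hmax := per_max w dw s ltac:(intros u; unfold w; rewrite Hp; auto) Hwd Hn).
  assert (H0 := deriv_max_zero w s _ (Hwd s) Hmax).
  unfold dw in H0. destruct (Rle_dec (b s + M) 0). lra.
  rewrite Rabs_right in H0 by lra. specialize (Hr s ltac:(lra)). nra.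
Qed.

Lemma attr_eq eps lam b phi P g : perb eps lam b -> 0 < g ->
  (forall u, Rabs (phi u) <= P) ->
  (forall u, is_derive phi u (4/3 * Rabs (b u) - 2 * eps - g)) ->
  forall s x, in_attractor eps lam s x <-> x = b s.
Proof.
  intros Hb Hg HP Hphi s x. pose proof Hb as (Hp & Hk & Hd). split.
  - intros [y [Hy [Hy0 Hbd]]]. rewrite <- Hy0. apply (uniq_bounded eps lam b phi P g s y Hb Hg HP Hphi Hy Hbd).
  - intros Hx; subst x. unfold in_attractor. refine (ex_intro _ (fun t => b (s + t)) _). split; [|split].
    + intros t. apply is_derive_shiftl. apply Hd.
    + rewrite Rplus_0_r. auto.
    + exists (Kb lam). intros t. apply Hk.
Qed.

Lemma lowerb_eq eps lam b phi P g : perb eps lam b -> 0 < g ->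
  (forall u, Rabs (phi u) <= P) ->
  (forall u, is_derive phi u (4/3 * Rabs (b u) - 2 * eps - g)) ->
  lowerb eps lam = b.
Proof.
  intros Hb Hg HP Hphi. apply functional_extensionality. intros s.
  unfold lowerb. rewrite (Glb_Rbar_eqset _ (fun x => x = b s)).
  - rewrite (is_glb_Rbar_unique _ (b s)). auto.
    split.
    + intros x Hx; subst x. simpl. lra.
    + intros l Hl. apply Hl. auto.
  - intros x. apply (attr_eq eps lam b phi P g); auto.
Qed.

Lemma get_b eps lam : 0 <= eps < 1/100000 ->
  exists b phi P g, perb eps lam b /\ 0 < g /\ 0 <= P /\ (forall u, Rabs (phi u) <= P) /\
    (forall u, is_derive phi u (4/3 * Rabs (b u) - 2 * eps - g)) /\ lowerb eps lam = b.
Proof.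
  intros He. destruct (exist_per eps lam ltac:(lra)) as [b Hb].
  destruct (phi_data eps lam b He Hb) as (phi & P & g & Hg & HP0 & HP & Hphi).
  exists b, phi, P, g. split; [exact Hb|]. split; [auto|]. split; [auto|].
  split; [auto|]. split; [auto|].
  apply (lowerb_eq eps lam b phi P g Hb Hg HP Hphi).
Qed.

Theorem mainTheorem12 :
  exists eps0 : R, 0 < eps0 <= 1 /\
    forall eps : R, 0 <= eps < eps0 ->
      (forall lam : R,
         attr_hyperbolic eps lam (lowerb eps lam) /\
         (forall s x, in_attractor eps lam s x <-> x = lowerb eps lam s)) /\
      (forall lam1 lam2 : R, lam1 < lam2 ->
         forall s, lowerb eps lam1 s < lowerb eps lam2 s) /\
      (forall M : R, exists L : R, forall lam, L <= lam ->
         forall s, M <= lowerb eps lam s) /\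
      (forall M : R, exists L : R, forall lam, lam <= L ->
         forall s, lowerb eps lam s <= M).
Proof.
  exists (1/100000). split. lra. intros eps He. split; [|split; [|split]].
  - intros lam. destruct (get_b eps lam He) as (b & phi & P & g & Hb & Hg & HP0 & HP & Hphi & Heq).
    rewrite Heq. pose proof Hb as (Hp & Hk & Hd). split.
    + split.
      * split; [auto|split].
        -- intros s. apply (ex_derive_continuous b s). eexists. apply Hd.
        -- intros s t. apply is_derive_shiftl. apply Hd.
      * exists 1, (exp P), (g / 2). split; [lra|split; [|split; [lra|]]].
        -- pose proof (exp_ineq1_le P). lra.
        -- intros s y Hy _ t Ht. apply (hyp_bound eps lam b phi P g s y); auto.
    + apply (attr_eq eps lam b phi P g); auto.
  - intros lam1 lam2 Hl s.
    destruct (get_b eps lam1 He) as (b1 & phi1 & P1 & g1 & Hb1 & _ & _ & _ & _ & Heq1).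
    destruct (get_b eps lam2 He) as (b2 & phi2 & P2 & g2 & Hb2 & Hg2 & _ & HP2 & Hphi2 & Heq2).
    rewrite Heq1, Heq2. apply (mono_lam eps lam1 lam2 b1 b2 phi2 P2 g2); auto.
  - intros M. set (M' := Rmax M 0). exists (M' * M' + 3). intros lam Hl s.
    destruct (get_b eps lam He) as (b & _ & _ & _ & Hb & _ & _ & _ & _ & Heq). rewrite Heq.
    assert (M <= M') by apply Rmax_l. assert (0 <= M') by apply Rmax_r.
    assert (M' <= b s) by (apply (lim_up eps lam b M'); auto; lra). lra.
  - intros M. set (M' := Rmax (- M) 0). exists (- (M' * M' + 3)). intros lam Hl s.
    destruct (get_b eps lam He) as (b & _ & _ & _ & Hb & _ & _ & _ & _ & Heq). rewrite Heq.
    assert (- M <= M') by apply Rmax_l. assert (0 <= M') by apply Rmax_r.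
    assert (b s <= - M') by (apply (lim_down eps lam b M'); auto; lra). lra.
Qed.
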